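(* Consider the utility-minus-cost problem $$\max_{\boldsymbol{r},\boldsymbol{\phi}}\ \sum_{i\in\mathcal{V}}\sum_{a\in\mathcal{A}}U_{ia}(r_i(a))-\sum_{(i,j)\in\mathcal{E}}D_{ij}(F_{ij})-\sum_{i\in\mathcal{V}}C_i(G_i)\quad\text{s.t. } 0\le r_i(a)\le\bar r_i(a),\ \boldsymbol{r}\in\mathcal{D}_{\boldsymbol{r}},\ \boldsymbol{\phi}\in\mathcal{D}_{\boldsymbol{\phi}}(\boldsymbol{r}),$$ reparametrized by admission fractions $\phi_{i^Vi}(a),\phi_{i^Vd_a}(a)\ge0$ with $\phi_{i^Vi}(a)+\phi_{i^Vd_a}(a)=1$ and $r_i(a)=\phi_{i^Vi}(a)\,\bar r_i(a)$. Let $(\boldsymbol{r},\boldsymbol{\phi})$ with admission fractions be feasible. If $\boldsymbol{\phi}$ satisfies condition (SC) (for input $\boldsymbol{r}$), and for all $i\in\mathcal{V}$ and $a\in\mathcal{A}$, $$\frac{\partial T}{\partial t_i(a,0)}\le U'_{ia}(r_i(a))\ \text{ if }\phi_{i^Vi}(a)>0,\qquad \frac{\partial T}{\partial t_i(a,0)}\ge U'_{ia}(r_i(a))\ \text{ if }\phi_{i^Vd_a}(a)>0,$$ then $(\boldsymbol{r},\boldsymbol{\phi})$ is a global optimal solution of the utility-minus-cost problem.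
   Context: Service-chain computing network model. $\mathcal{G}=(\mathcal{V},\mathcal{E})$ is a directed, strongly connected graph whose links are bidirectional ($(i,j)\in\mathcal{E}\Rightarrow(j,i)\in\mathcal{E}$). $\mathcal{A}$ is a finite set of applications; application $a$ has a destination $d_a\in\mathcal{V}$ and a chain of $|\mathcal{T}_a|$ tasks performed in order. The set of stages is $\mathcal{S}=\{(a,k): a\in\mathcal{A}, k=0,1,\dots,|\mathcal{T}_a|\}$; stage $(a,k)$ denotes packets that have completed the first $k$ tasks of $a$, and has packet size $L_{(a,k)}>0$. Exogenous input rates are $r_i(a)\ge 0$ (stage $(a,0)$ packets injected at node $i$), $\boldsymbol{r}=[r_i(a)]$. The forwarding strategy $\boldsymbol{\phi}=[\phi_{ij}(a,k)]_{(a,k)\in\mathcal{S},i\in\mathcal{V},j\in\{0\}\cup\mathcal{V}}$ has $\phi_{ij}(a,k)\in[0,1]$; for $j\in\mathcal{V}$ it is the fraction of node $i$'s stage-$(a,k)$ traffic sent to node $j$ (with $\phi_{ij}(a,k)=0$ if $(i,j)\notin\mathcal{E}$), and $\phi_{i0}(a,k)$ is the fraction sent to $i$'s local processor, which converts each stage-$(a,k)$ packet into one stage-$(a,k+1)$ packet; $\phi_{i0}(a,|\mathcal{T}_a|)=0$. Flow conservation: $\sum_{j\in\{0\}\cup\mathcal{V}}\phi_{ij}(a,k)=0$ if $k=|\mathcal{T}_a|$ and $i=d_a$, and $=1$ otherwise. Traffic $t_i(a,k)$ satisfies $t_i(a,0)=\sum_{j\in\mathcal{V}}t_j(a,0)\phi_{ji}(a,0)+r_i(a)$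 and, for $k\ge1$, $t_i(a,k)=\sum_{j\in\mathcal{V}}t_j(a,k)\phi_{ji}(a,k)+t_i(a,k-1)\phi_{i0}(a,k-1)$. Link flows $f_{ij}(a,k)=t_i(a,k)\phi_{ij}(a,k)$, processor inputs $g_i(a,k)=t_i(a,k)\phi_{i0}(a,k)$, total link flow $F_{ij}=\sum_{(a,k)\in\mathcal{S}}L_{(a,k)}f_{ij}(a,k)$, computation workload $G_i=\sum_{(a,k)\in\mathcal{S}}w_i(a,k)g_i(a,k)$ with weights $w_i(a,k)>0$. Link costs $D_{ij}(\cdot)$ and computation costs $C_i(\cdot)$ are increasing, continuously differentiable, convex functions (possibly taking value $+\infty$ outside a domain). Total cost $T(\boldsymbol{\phi})=\sum_{(i,j)\in\mathcal{E}}D_{ij}(F_{ij})+\sum_{i\in\mathcal{V}}C_i(G_i)$. The feasible set $\mathcal{D}_{\boldsymbol{\phi}}(\boldsymbol{r})$ consists of $\boldsymbol{\phi}$ satisfying flow conservation with all $D_{ij}(F_{ij})<\infty$ and $C_i(G_i)<\infty$; $\mathcal{D}_{\boldsymbol{r}}=\{\boldsymbol{r}\ge0:\mathcal{D}_{\boldsymbol{\phi}}(\boldsymbol{r})\neq\emptyset\}$. Marginal quantities: $\partial T/\partial t_i(a,k)$ is the marginal total cost of an additional exogenous injection of stage-$(a,k)$ traffic at node $i$ (with $\boldsymbol{\phi}$ fixed); it satisfies $\partial T/\partial t_{d_a}(a,|\mathcal{T}_a|)=0$, for $k=|\mathcal{T}_a|$: $\frac{\partial T}{\partial t_i(a,k)}=\sum_{j\in\mathcal{V}}\phi_{ij}(a,k)\big(L_{(a,k)}D'_{ij}(F_{ij})+\frac{\partial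 T}{\partial t_j(a,k)}\big)$, and for $k<|\mathcal{T}_a|$: $\frac{\partial T}{\partial t_i(a,k)}=\phi_{i0}(a,k)\big(w_i(a,k)C'_i(G_i)+\frac{\partial T}{\partial t_i(a,k+1)}\big)+\sum_{j\in\mathcal{V}}\phi_{ij}(a,k)\big(L_{(a,k)}D'_{ij}(F_{ij})+\frac{\partial T}{\partial t_j(a,k)}\big)$. Modified marginals: $\delta_{ij}(a,k)=L_{(a,k)}D'_{ij}(F_{ij})+\frac{\partial T}{\partial t_j(a,k)}$ for $j\in\mathcal{V}$ with $(i,j)\in\mathcal{E}$, $\delta_{i0}(a,k)=w_i(a,k)C'_i(G_i)+\frac{\partial T}{\partial t_i(a,k+1)}$ for $k<|\mathcal{T}_a|$, and $\delta_{ij}(a,k)=\infty$ for $(i,j)\notin\mathcal{E}$ and $\delta_{i0}(a,|\mathcal{T}_a|)=\infty$. Condition (SC): for all $i\in\mathcal{V}$, $j\in\{0\}\cup\mathcal{V}$, $(a,k)\in\mathcal{S}$, $\delta_{ij}(a,k)=\min_{j'\in\{0\}\cup\mathcal{V}}\delta_{ij'}(a,k)$ if $\phi_{ij}(a,k)>0$ and $\delta_{ij}(a,k)\ge\min_{j'}\delta_{ij'}(a,k)$ if $\phi_{ij}(a,k)=0$. Congestion control: each pair $(i,a)$ has a user-specified upper limit $\bar r_i(a)\ge0$ on the admitted rate and a utility function $U_{ia}:[0,\bar r_i(a)]\to\mathbb{R}$ that is increasing, concave, continuously differentiable, with $U_{ia}(0)=0$. A virtual gateway node $i^V$ receives rate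 $\bar r_i(a)$; the fraction $\phi_{i^Vi}(a)$ is admitted to physical node $i$ (so $r_i(a)=\phi_{i^Vi}(a)\bar r_i(a)$), the fraction $\phi_{i^Vd_a}(a)$ is rejected, incurring cost $U_{ia}(\bar r_i(a))-U_{ia}(r_i(a))$. *)

(* Defs.v *)
From HB Require Import structures.
From mathcomp Require Import all_boot all_order all_algebra.
From mathcomp Require Import all_classical all_reals all_analysis.
Set Implicit Arguments. Unset Strict Implicit. Unset Printing Implicit Defensive.
Import Order.TTheory GRing.Theory Num.Theory.
Import numFieldNormedType.Exports.
Local Open Scope ring_scope.

Definition nondecreasing_on {R : realType} (P : R -> Prop) (f : R -> R) :=
  forall x y, P x -> P y -> x <= y -> f x <= f y.
Definition convex_on {R : realType} (P : R -> Prop) (f : R -> R) :=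
  forall x y (l : R), P x -> P y -> 0 <= l <= 1 ->
    f (l * x + (1 - l) * y) <= l * f x + (1 - l) * f y.
Definition concave_on {R : realType} (P : R -> Prop) (f : R -> R) :=
  convex_on P (fun x => - f x).
Definition C1_on {R : realType} (P : R -> Prop) (f : R -> R) :=
  forall x, P x -> derivable f x 1 /\ {for x, continuous (derive1 f)}.

(* A cost function with value f x for x < c and value +oo for x >= c
   (c = +oo allowed); on its finite domain [0, c) (flows are >= 0) it is
   increasing, convex, continuously differentiable. *)
Definition cost_dom {R : realType} (c : \bar R) (x : R) : Prop :=
  0 <= x /\ (x%:E < c)%E.
Definition cost_fun {R : realType} (f : R -> R) (c : \bar R) : Prop :=
  nondecreasing_on (cost_dom c) f /\ convex_on (cost_dom c) f /\
  C1_on (cost_dom c) f.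

Definition util_dom {R : realType} (rb : R) (x : R) : Prop := 0 <= x <= rb.
Definition utility_fun {R : realType} (U : R -> R) (rb : R) : Prop :=
  U 0 = 0 /\ nondecreasing_on (util_dom rb) U /\
  concave_on (util_dom rb) U /\ C1_on (util_dom rb) U.

Record network (R : realType) (V A : finType) := Network {
  E : rel V;
  dest : A -> V;
  ntask : A -> nat;                (* |T_a|; stages (a,k), k = 0..|T_a| *)
  Lsize : A -> nat -> R;
  wgt : V -> A -> nat -> R;
  Dl : V -> V -> R -> R;
  capD : V -> V -> \bar R;         (* D_ij = +oo for F >= capD i j *)
  Cp : V -> R -> R;
  capC : V -> \bar R;              (* C_i = +oo for G >= capC i *)
  rbar : V -> A -> R;
  Util : V -> A -> R -> R
}.

Definition network_ok {R : realType} {V A : finType} (N : network R V A) : Prop :=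
  symmetric (E N) /\ (forall i j, connect (E N) i j) /\
  (forall a k, (k <= ntask N a)%N -> 0 < Lsize N a k) /\
  (forall i a k, (k <= ntask N a)%N -> 0 < wgt N i a k) /\
  (forall i j, E N i j -> cost_fun (Dl N i j) (capD N i j)) /\
  (forall i, cost_fun (Cp N i) (capC N i)) /\
  (forall i a, 0 <= rbar N i a) /\
  (forall i a, utility_fun (Util N i a) (rbar N i a)).

Section Model.
Variables (R : realType) (V A : finType) (N : network R V A).

(* phi a k i j = phi_ij(a,k) (j in V), phi0 a k i = phi_i0(a,k) (processor),
   t a k i = t_i(a,k), r i a = r_i(a). *)
Definition Flow (phi : A -> nat -> V -> V -> R) (t : A -> nat -> V -> R)
    (i j : V) : R :=
  \sum_(a : A) \sum_(k < (ntask N a).+1) Lsize N a k * (t a k i * phi a k i j).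

Definition Work (phi0 : A -> nat -> V -> R) (t : A -> nat -> V -> R)
    (i : V) : R :=
  \sum_(a : A) \sum_(k < (ntask N a).+1) wgt N i a k * (t a k i * phi0 a k i).

Definition feasible (r : V -> A -> R) (phi : A -> nat -> V -> V -> R)
    (phi0 : A -> nat -> V -> R) (t : A -> nat -> V -> R) : Prop :=
  (forall a k i j, (k <= ntask N a)%N -> 0 <= phi a k i j <= 1) /\
  (forall a k i, (k <= ntask N a)%N -> 0 <= phi0 a k i <= 1) /\
  (forall a k i j, (k <= ntask N a)%N -> ~~ E N i j -> phi a k i j = 0) /\
  (forall a i, phi0 a (ntask N a) i = 0) /\
  (forall a k i, (k <= ntask N a)%N ->
     phi0 a k i + \sum_(j : V) phi a k i j =
       if (k == ntask N a) && (i == dest N a) then 0 else 1) /\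
  (forall a k i, (k <= ntask N a)%N -> 0 <= t a k i) /\
  (forall a i, t a 0%N i = \sum_(j : V) t a 0%N j * phi a 0%N j i + r i a) /\
  (forall a k i, (0 < k <= ntask N a)%N ->
     t a k i = \sum_(j : V) t a k j * phi a k j i + t a k.-1 i * phi0 a k.-1 i) /\
  (forall i j, E N i j -> (Flow phi t i j)%:E < capD N i j)%E /\
  (forall i, (Work phi0 t i)%:E < capC N i)%E.

Definition objective (r : V -> A -> R) (phi : A -> nat -> V -> V -> R)
    (phi0 : A -> nat -> V -> R) (t : A -> nat -> V -> R) : R :=
  \sum_(i : V) \sum_(a : A) Util N i a (r i a)
  - \sum_(i : V) \sum_(j : V | E N i j) Dl N i j (Flow phi t i j)
  - \sum_(i : V) Cp N i (Work phi0 t i).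

(* modified marginals (finite parts), with p a k i = dT/dt_i(a,k) *)
Definition dlink (phi : A -> nat -> V -> V -> R) (phi0 : A -> nat -> V -> R)
    (t : A -> nat -> V -> R) (p : A -> nat -> V -> R) a k i j : R :=
  Lsize N a k * derive1 (Dl N i j) (Flow phi t i j) + p a k j.
Definition dproc (phi : A -> nat -> V -> V -> R) (phi0 : A -> nat -> V -> R)
    (t : A -> nat -> V -> R) (p : A -> nat -> V -> R) a k i : R :=
  wgt N i a k * derive1 (Cp N i) (Work phi0 t i) + p a k.+1 i.

Definition marginals (phi : A -> nat -> V -> V -> R) (phi0 : A -> nat -> V -> R)
    (t : A -> nat -> V -> R) (p : A -> nat -> V -> R) : Prop :=
  (forall a, p a (ntask N a) (dest N a) = 0) /\
  (forall a i, p a (ntask N a) i =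
     \sum_(j : V) phi a (ntask N a) i j * dlink phi phi0 t p a (ntask N a) i j) /\
  (forall a k i, (k < ntask N a)%N -> p a k i =
     phi0 a k i * dproc phi phi0 t p a k i
     + \sum_(j : V) phi a k i j * dlink phi phi0 t p a k i j).

Definition delta_link phi phi0 t p a k i j : \bar R :=
  if E N i j then (dlink phi phi0 t p a k i j)%:E else +oo%E.
Definition delta_proc phi phi0 t p a k i : \bar R :=
  if (k < ntask N a)%N then (dproc phi phi0 t p a k i)%:E else +oo%E.
Definition delta_min phi phi0 t p a k i : \bar R :=
  Order.min (delta_proc phi phi0 t p a k i)
            (\big[Order.min/+oo%E]_(j : V) delta_link phi phi0 t p a k i j).

Definition SC (phi : A -> nat -> V -> V -> R) (phi0 : A -> nat -> V -> R)
    (t : A -> nat -> V -> R) (p : A -> nat -> V -> R) : Prop :=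
  forall a k i, (k <= ntask N a)%N ->
    (forall j,
      (0 < phi a k i j -> delta_link phi phi0 t p a k i j = delta_min phi phi0 t p a k i) /\
      (phi a k i j = 0 -> (delta_min phi phi0 t p a k i <= delta_link phi phi0 t p a k i j)%E)) /\
    (0 < phi0 a k i -> delta_proc phi phi0 t p a k i = delta_min phi phi0 t p a k i) /\
    (phi0 a k i = 0 -> (delta_min phi phi0 t p a k i <= delta_proc phi phi0 t p a k i)%E).

End Model.

(* Main.v *)
Require Import Defs.
From HB Require Import structures.
From mathcomp Require Import all_boot all_order all_algebra.
From mathcomp Require Import all_classical all_reals all_analysis.
From mathcomp Require Import ring lra.
Import Order.TTheory GRing.Theory Num.Theory.
Import numFieldNormedType.Exports.
Local Open Scope ring_scope.
Local Open Scope classical_set_scope.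
Lemma tangent_le (R : realType) (P : R -> Prop) (f : R -> R) x y :
  convex_on P f -> P x -> P y -> derivable f x 1 ->
  derive1 f x * (y - x) <= f y - f x.
Proof.
move=> cf Px Py df.
have hq : (fun h : R => h^-1 *: ((f \o shift x) (h *: 1) - f x)) @ 0^' --> derive1 f x.
  by rewrite derive1E; exact: df.
have key : forall h, 0 < h / (y - x) <= 1 ->
    f (h + x) - f x <= h / (y - x) * (f y - f x).
  move=> h /andP[l0 l1].
  have := cf y x (h / (y - x)) Py Px.
  rewrite (ltW l0) l1 => /(_ isT).
  have -> : h / (y - x) * y + (1 - h / (y - x)) * x = h + x.
    have yx : y - x != 0.
      by apply/negP => /eqP e; move: l0; rewrite e invr0 mulr0 ltxx.
    by field.
  lra.
have [yx|yx|->] := ltgtP x y; last by rewrite subrr mulr0 subrr.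
- have yx0 : 0 < y - x by lra.
  rewrite -ler_pdivlMr //.
  apply: (cvgr_to_le (cvg_dnbhs_at_right hq)).
  near=> h.
  have h0 : 0 < h by near: h; exact: nbhs_right_gt.
  have h1 : h < y - x by near: h; exact: nbhs_right_lt.
  rewrite /= -[h%:A]/(h * 1) mulr1 -[_ *: _]/(_ * _).
  have := key h; rewrite divr_gt0 // ler_pdivrMr // mul1r (ltW h1) => /(_ isT) H.
  apply: (le_trans (ler_wpM2l _ H)); first by rewrite invr_ge0 ltW.
  rewrite le_eqVlt; apply/orP; left; apply/eqP; field.
  by rewrite gt_eqF // gt_eqF.
- have yx0 : y - x < 0 by lra.
  rewrite -ler_ndivrMr //.
  apply: (cvgr_to_ge (cvg_dnbhs_at_left hq)).
  near=> h.
  have h0 : h < 0 by near: h; exact: nbhs_left_lt.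
  have h1 : y - x < h by near: h; exact: nbhs_left_gt.
  rewrite /= -[h%:A]/(h * 1) mulr1 -[_ *: _]/(_ * _).
  have := key h; rewrite ltr_ndivlMr // mul0r h0 ler_ndivrMr // mul1r (ltW h1) => /(_ isT) H.
  apply: le_trans (ler_wnM2l _ H); last by rewrite invr_le0 ltW.
  rewrite le_eqVlt; apply/orP; left; apply/eqP; field.
  by rewrite lt_eqF // lt_eqF.
Unshelve. all: end_near.
Qed.
Lemma telesc (R : realType) (V : finType) (n : nat) (t1 : nat -> V -> R)
  (ps : nat -> V -> V -> R) (ps0 : nat -> V -> R) (pp : nat -> V -> R) (r1 : V -> R) :
  (forall j, t1 0%N j = \sum_i t1 0%N i * ps 0%N i j + r1 j) ->
  (forall k j, (0 < k <= n)%N -> t1 k j = \sum_i t1 k i * ps k i j + t1 k.-1 j * ps0 k.-1 j) ->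
  (forall i, ps0 n i = 0) ->
  \sum_(k < n.+1) \sum_i (t1 k i * ps0 k i * pp k.+1 i
     + \sum_j t1 k i * ps k i j * pp k j - t1 k i * pp k i)
  = - \sum_i pp 0%N i * r1 i.
Proof.
move=> H0 Hk Hn.
pose Ts := fun k : nat => \sum_i t1 k i * ps0 k i * pp k.+1 i.
pose X := fun k : nat => if k == 0%N then \sum_i pp 0%N i * r1 i else Ts k.-1.
have step : forall k : 'I_n.+1, \sum_i (t1 k i * ps0 k i * pp k.+1 i
     + \sum_j t1 k i * ps k i j * pp k j - t1 k i * pp k i) = Ts k - X k.
  move=> k.
  have HB : \sum_i \sum_j t1 k i * ps k i j * pp k j =
      \sum_j t1 k j * pp k j - X k.
    rewrite exchange_big /=.
    transitivity (\sum_j (\sum_i t1 k i * ps k i j) * pp k j).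
      by apply: eq_bigr => j _; rewrite mulr_suml.
    rewrite /X; case: eqP => [k0|kn0].
    - rewrite -sumrB; apply: eq_bigr => j _; rewrite k0 (H0 j); ring.
    - have kpos : (0 < k)%N by case: (nat_of_ord k) kn0.
      rewrite /Ts prednK // -sumrB; apply: eq_bigr => j _.
      rewrite (Hk k j); first ring.
      by rewrite kpos -ltnS ltn_ord.
  rewrite !big_split /= sumrN HB -/(Ts k); lra.
rewrite (eq_bigr _ (fun k _ => step k)) sumrB.
rewrite [X in X - _ = _]big_ord_recr [X in _ - X = _]big_ord_recl /=.
rewrite /X /= /Ts.
rewrite [X in _ + X - _ = _]big1; last by move=> i _; rewrite Hn mulr0 mul0r.
rewrite addr0.
have E : forall a b c : R, b = c -> b - (a + c) = - a by move=> a b c ->; ring.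
by apply: E.
Qed.
Lemma sc_bound (R : realType) (V A : finType) (N : network R V A)
  (rr : V -> A -> R)
  (phi : A -> nat -> V -> V -> R) (phi0 : A -> nat -> V -> R)
  (t : A -> nat -> V -> R) (p : A -> nat -> V -> R) :
  feasible N rr phi phi0 t -> marginals N phi phi0 t p -> SC N phi phi0 t p ->
  forall a k i, (k <= ntask N a)%N -> ~~ ((k == ntask N a) && (i == dest N a)) ->
  (forall j, E N i j -> p a k i <= dlink N phi phi0 t p a k i j) /\
  ((k < ntask N a)%N -> p a k i <= dproc N phi phi0 t p a k i).
Proof.
move=> [Hphi [Hphi0 [Hne [Hfin [Hsum _]]]]] [_ [Hpn Hpk]] HSC a k i hk nd.
have sum1 : phi0 a k i + \sum_j phi a k i j = 1 by rewrite Hsum // (negbTE nd).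
have [Hl [Hpp Hpz]] := HSC a k i hk.
set m := delta_min N phi phi0 t p a k i in Hl Hpp Hpz.
have mle_link : forall j, (m <= delta_link N phi phi0 t p a k i j)%E.
  move=> j; rewrite /m /delta_min ge_min; apply/orP; right; exact: bigmin_le.
have mle_proc : (m <= delta_proc N phi phi0 t p a k i)%E.
  by rewrite /m /delta_min ge_min lexx.
have edge_pos : forall j, 0 < phi a k i j -> E N i j.
  move=> j hj; apply/negPn/negP => ne; move: hj; by rewrite Hne // ltxx.
have proc_pos : 0 < phi0 a k i -> (k < ntask N a)%N.
  rewrite ltn_neqAle hk andbT; apply: contraTN => /eqP ->; by rewrite Hfin ltxx.
have [c mc] : exists c : R, m = c%:E.
  have [h0|h0] := ltP 0 (phi0 a k i).
    exists (dproc N phi phi0 t p a k i).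
    by rewrite -(Hpp h0) /delta_proc (proc_pos h0).
  case: (boolP [exists j, 0 < phi a k i j]) => [/existsP[j hj]|/existsPn H].
    exists (dlink N phi phi0 t p a k i j).
    by rewrite -((Hl j).1 hj) /delta_link (edge_pos j hj).
  exfalso.
  have z0 : phi0 a k i = 0 by apply/le_anti; rewrite h0 (andP (Hphi0 a k i hk)).1.
  have : \sum_j phi a k i j = 0.
    apply: big1 => j _; apply/le_anti; rewrite (andP (Hphi a k i j hk)).1 andbT.
    by move: (H j); rewrite ltNge negbK.
  by move: sum1; rewrite z0 add0r => -> /eqP; rewrite oner_eq0.
have procE : phi0 a k i * dproc N phi phi0 t p a k i = phi0 a k i * c.
  have [h0|h0] := ltP 0 (phi0 a k i).
    have := Hpp h0; rewrite /delta_proc (proc_pos h0) mc => -[->] //.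
  have -> : phi0 a k i = 0 by apply/le_anti; rewrite h0 (andP (Hphi0 a k i hk)).1.
  by rewrite !mul0r.
have linkE : forall j, phi a k i j * dlink N phi phi0 t p a k i j = phi a k i j * c.
  move=> j; have [h0|h0] := ltP 0 (phi a k i j).
    have := (Hl j).1 h0; rewrite /delta_link (edge_pos j h0) mc => -[->] //.
  have -> : phi a k i j = 0 by apply/le_anti; rewrite h0 (andP (Hphi a k i j hk)).1.
  by rewrite !mul0r.
have pc : p a k i = c.
  have [kn|kn] := ltnP k (ntask N a).
    rewrite (Hpk a k i kn) procE (eq_bigr (fun j => phi a k i j * c)); last by move=> j _; exact: linkE.
    rewrite -mulr_suml -mulrDl sum1.
    by rewrite mul1r.
  have ekn : k = ntask N a by apply/eqP; rewrite eqn_leq hk kn.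
  have z : phi0 a k i = 0 by rewrite ekn Hfin.
  move: sum1; rewrite z add0r => s1.
  have := Hpn a i; rewrite -ekn => ->.
  rewrite (eq_bigr (fun j => phi a k i j * c)); last by move=> j _; exact: linkE.
  by rewrite -mulr_suml s1 mul1r.
rewrite pc; split.
  move=> j ej; have := mle_link j; by rewrite mc /delta_link ej lee_fin.
by move=> kn; have := mle_proc; rewrite mc /delta_proc kn lee_fin.
Qed.
Lemma lin_expand (R : realType) (V A : finType) (N : network R V A)
  (phi : A -> nat -> V -> V -> R) (phi0 : A -> nat -> V -> R)
  (t : A -> nat -> V -> R) (r1 : V -> A -> R) (ps : A -> nat -> V -> V -> R)
  (ps0 : A -> nat -> V -> R) (t1 : A -> nat -> V -> R) :
  feasible N r1 ps ps0 t1 ->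
  \sum_i \sum_(j | E N i j) derive1 (Dl N i j) (Flow N phi t i j) * Flow N ps t1 i j
  + \sum_i derive1 (Cp N i) (Work N phi0 t i) * Work N ps0 t1 i
  = \sum_a \sum_(k < (ntask N a).+1) \sum_i
      (\sum_j Lsize N a k * derive1 (Dl N i j) (Flow N phi t i j) * (t1 a k i * ps a k i j)
       + wgt N i a k * derive1 (Cp N i) (Work N phi0 t i) * (t1 a k i * ps0 a k i)).
Proof.
move=> [_ [_ [Hne _]]].
have L1 : \sum_i \sum_(j | E N i j) derive1 (Dl N i j) (Flow N phi t i j) * Flow N ps t1 i j
  = \sum_a \sum_(k < (ntask N a).+1) \sum_i
      \sum_j Lsize N a k * derive1 (Dl N i j) (Flow N phi t i j) * (t1 a k i * ps a k i j).
  transitivity (\sum_i \sum_a \sum_(k < (ntask N a).+1) 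
      \sum_j Lsize N a k * derive1 (Dl N i j) (Flow N phi t i j) * (t1 a k i * ps a k i j)); last first.
    rewrite exchange_big /=; apply: eq_bigr => a _; exact: exchange_big.
  apply: eq_bigr => i _.
  rewrite big_mkcond /=.
  transitivity (\sum_j \sum_a \sum_(k < (ntask N a).+1)
      Lsize N a k * derive1 (Dl N i j) (Flow N phi t i j) * (t1 a k i * ps a k i j)); last first.
    rewrite exchange_big /=; apply: eq_bigr => a _; exact: exchange_big.
  apply: eq_bigr => j _; case: ifP => eij.
    rewrite /Flow mulr_sumr; apply: eq_bigr => a _; rewrite mulr_sumr; apply: eq_bigr => k _.
    ring.
  rewrite big1 // => a _; rewrite big1 // => k _.
  by rewrite Hne ?eij // ?mulr0 // -ltnS ltn_ord.
have L2 : \sum_i derive1 (Cp N i) (Work N phi0 t i) * Work N ps0 t1 i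
  = \sum_a \sum_(k < (ntask N a).+1) \sum_i
      wgt N i a k * derive1 (Cp N i) (Work N phi0 t i) * (t1 a k i * ps0 a k i).
  transitivity (\sum_i \sum_a \sum_(k < (ntask N a).+1) 
      wgt N i a k * derive1 (Cp N i) (Work N phi0 t i) * (t1 a k i * ps0 a k i)); last first.
    rewrite exchange_big /=; apply: eq_bigr => a _; exact: exchange_big.
  apply: eq_bigr => i _.
  rewrite /Work mulr_sumr; apply: eq_bigr => a _; rewrite mulr_sumr; apply: eq_bigr => k _.
  ring.
rewrite L1 L2 -big_split /=; apply: eq_bigr => a _.
rewrite -big_split /=; apply: eq_bigr => k _.
by rewrite -big_split.
Qed.

Lemma concave_tangent (R : realType) (P : R -> Prop) (f : R -> R) x y :
  concave_on P f -> P x -> P y -> derivable f x 1 ->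
  f y - f x <= derive1 f x * (y - x).
Proof.
move=> cf Px Py df.
have := @tangent_le R P (- f) x y cf Px Py (derivableN df).
rewrite derive1N // -[(- f) y]/(- f y) -[(- f) x]/(- f x); lra.
Qed.

Lemma ident (R : realType) (V A : finType) (N : network R V A)
  (phi : A -> nat -> V -> V -> R) (phi0 : A -> nat -> V -> R)
  (t : A -> nat -> V -> R) (p : A -> nat -> V -> R)
  (r1 : V -> A -> R) (ps : A -> nat -> V -> V -> R)
  (ps0 : A -> nat -> V -> R) (t1 : A -> nat -> V -> R) :
  feasible N r1 ps ps0 t1 ->
  \sum_i \sum_(j | E N i j) derive1 (Dl N i j) (Flow N phi t i j) * Flow N ps t1 i j
  + \sum_i derive1 (Cp N i) (Work N phi0 t i) * Work N ps0 t1 i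
  - \sum_i \sum_a p a 0%N i * r1 i a
  = \sum_a \sum_(k < (ntask N a).+1) \sum_i
      (t1 a k i * (ps0 a k i * dproc N phi phi0 t p a k i
         + \sum_j ps a k i j * dlink N phi phi0 t p a k i j) - t1 a k i * p a k i).
Proof.
move=> Hf; rewrite (@lin_expand _ _ _ N phi phi0 t _ _ _ _ Hf).
move: Hf => [_ [_ [_ [Hfin [_ [_ [Hc0 [Hck _]]]]]]]].
have Tel : \sum_a \sum_(k < (ntask N a).+1) \sum_i
    (t1 a k i * ps0 a k i * p a k.+1 i + \sum_j t1 a k i * ps a k i j * p a k j
     - t1 a k i * p a k i) = - \sum_i \sum_a p a 0%N i * r1 i a.
  rewrite exchange_big /= -sumrN; apply: eq_bigr => a _.
  apply: (@telesc _ _ _ (t1 a) (ps a) (ps0 a) (p a) (fun j => r1 j a)).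
  - by move=> j; exact: Hc0.
  - by move=> k j hk; exact: Hck.
  - by move=> i; exact: Hfin.
rewrite -Tel.
transitivity (\sum_a \sum_(k < (ntask N a).+1) \sum_i
      ((\sum_j Lsize N a k * derive1 (Dl N i j) (Flow N phi t i j) * (t1 a k i * ps a k i j)
       + wgt N i a k * derive1 (Cp N i) (Work N phi0 t i) * (t1 a k i * ps0 a k i))
      + (t1 a k i * ps0 a k i * p a k.+1 i + \sum_j t1 a k i * ps a k i j * p a k j
     - t1 a k i * p a k i))); last first.
  apply: eq_bigr => a _; apply: eq_bigr => k _; apply: eq_bigr => i _.
  rewrite /dproc /dlink mulrDr mulr_sumr.
  have E1 : \sum_j t1 a k i * (ps a k i j * (Lsize N a k * derive1 (Dl N i j) (Flow N phi t i j) + p a k j))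
    = \sum_j Lsize N a k * derive1 (Dl N i j) (Flow N phi t i j) * (t1 a k i * ps a k i j)
      + \sum_j t1 a k i * ps a k i j * p a k j.
    by rewrite -big_split /=; apply: eq_bigr => j _; ring.
  rewrite E1; ring.
rewrite -big_split /=; apply: eq_bigr => a _; rewrite -big_split /=; apply: eq_bigr => k _.
by rewrite -big_split.
Qed.

Lemma local_ge (R : realType) (V A : finType) (N : network R V A)
  (rr : V -> A -> R)
  (phi : A -> nat -> V -> V -> R) (phi0 : A -> nat -> V -> R)
  (t : A -> nat -> V -> R) (p : A -> nat -> V -> R)
  (r1 : V -> A -> R) (ps : A -> nat -> V -> V -> R)
  (ps0 : A -> nat -> V -> R) (t1 : A -> nat -> V -> R) :
  feasible N rr phi phi0 t -> marginals N phi phi0 t p -> SC N phi phi0 t p ->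
  feasible N r1 ps ps0 t1 ->
  forall a k i, (k <= ntask N a)%N ->
  t1 a k i * p a k i <= t1 a k i * (ps0 a k i * dproc N phi phi0 t p a k i
         + \sum_j ps a k i j * dlink N phi phi0 t p a k i j).
Proof.
move=> Hf Hp HSC [Hps [Hps0 [Hne [Hfin [Hsum [Ht _]]]]]] a k i hk.
apply: ler_wpM2l; first exact: Ht.
case: (boolP ((k == ntask N a) && (i == dest N a))) => [/andP[/eqP ek /eqP ei]|nd].
- move: Hp => [Hpd _]; rewrite ek ei Hpd.
  have s0 : ps0 a (ntask N a) (dest N a) + \sum_j ps a (ntask N a) (dest N a) j = 0.
    by rewrite Hsum ?leqnn // !eqxx.
  rewrite Hfin add0r in s0.
  rewrite Hfin mul0r add0r big1 // => j _.
  rewrite (psumr_eq0P _ s0) ?mul0r // => j' _.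
  by have /andP[] := Hps a (ntask N a) (dest N a) j' (leqnn _).
- have [Bl Bp] := @sc_bound _ _ _ N rr phi phi0 t p Hf Hp HSC a k i hk nd.
  have sum1 : ps0 a k i + \sum_j ps a k i j = 1 by rewrite Hsum // (negbTE nd).
  apply: (@le_trans _ _ (ps0 a k i * p a k i + \sum_j ps a k i j * p a k i)).
    by rewrite -mulr_suml -mulrDl sum1 mul1r.
  apply: lerD.
    have [kn|kn] := ltnP k (ntask N a).
      apply: ler_wpM2l; last exact: Bp.
      by have /andP[] := Hps0 a k i hk.
    have ek : k = ntask N a by apply/eqP; rewrite eqn_leq hk kn.
    by rewrite ek Hfin !mul0r.
  apply: ler_sum => j _.
  case: (boolP (E N i j)) => ej.
    apply: ler_wpM2l; last exact: Bl.
    by have /andP[] := Hps a k i j hk.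
  by rewrite Hne // !mul0r.
Qed.

Lemma local_eq (R : realType) (V A : finType) (N : network R V A)
  (rr : V -> A -> R)
  (phi : A -> nat -> V -> V -> R) (phi0 : A -> nat -> V -> R)
  (t : A -> nat -> V -> R) (p : A -> nat -> V -> R) :
  feasible N rr phi phi0 t -> marginals N phi phi0 t p ->
  forall a k i, (k <= ntask N a)%N ->
  p a k i = phi0 a k i * dproc N phi phi0 t p a k i
         + \sum_j phi a k i j * dlink N phi phi0 t p a k i j.
Proof.
move=> [_ [_ [_ [Hfin _]]]] [_ [Hpn Hpk]] a k i hk.
have [kn|kn] := ltnP k (ntask N a); first exact: Hpk.
have ek : k = ntask N a by apply/eqP; rewrite eqn_leq hk kn.
by rewrite ek Hfin mul0r add0r.
Qed.

Lemma Flow_ge0 (R : realType) (V A : finType) (N : network R V A)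
  (r1 : V -> A -> R) (ps : A -> nat -> V -> V -> R)
  (ps0 : A -> nat -> V -> R) (t1 : A -> nat -> V -> R) :
  network_ok N -> feasible N r1 ps ps0 t1 ->
  (forall i j, 0 <= Flow N ps t1 i j) /\ (forall i, 0 <= Work N ps0 t1 i).
Proof.
move=> [_ [_ [HL [Hw _]]]] [Hps [Hps0 [_ [_ [_ [Ht _]]]]]].
have hk : forall a (k : 'I_(ntask N a).+1), (k <= ntask N a)%N.
  by move=> a k; rewrite -ltnS ltn_ord.
split.
  move=> i j; apply: sumr_ge0 => a _; apply: sumr_ge0 => k _.
  apply: mulr_ge0; first exact: ltW (HL _ _ (hk a k)).
  apply: mulr_ge0; first exact: Ht.
  by have /andP[] := Hps a k i j (hk a k).
move=> i; apply: sumr_ge0 => a _; apply: sumr_ge0 => k _.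
apply: mulr_ge0; first exact: ltW (Hw _ _ _ (hk a k)).
apply: mulr_ge0; first exact: Ht.
by have /andP[] := Hps0 a k i (hk a k).
Qed.

Local Close Scope classical_set_scope.

Theorem theorem5 (R : realType) (V A : finType) (N : network R V A)
  (HN : network_ok N)
  (phi : A -> nat -> V -> V -> R) (phi0 : A -> nat -> V -> R)
  (t : A -> nat -> V -> R)
  (adm rej : V -> A -> R)   (* phi_{i^V i}(a), phi_{i^V d_a}(a) *)
  (p : A -> nat -> V -> R)  (* p a k i = dT/dt_i(a,k) *)
  (Hadm : forall i a, 0 <= adm i a /\ 0 <= rej i a /\ adm i a + rej i a = 1)
  (Hfeas : feasible N (fun i a => adm i a * rbar N i a) phi phi0 t)
  (Hp : marginals N phi phi0 t p)
  (HSC : SC N phi phi0 t p)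
  (HU : forall i a,
     (0 < adm i a -> p a 0%N i <= derive1 (Util N i a) (adm i a * rbar N i a)) /\
     (0 < rej i a -> derive1 (Util N i a) (adm i a * rbar N i a) <= p a 0%N i)) :
  forall (r' : V -> A -> R) (phi' : A -> nat -> V -> V -> R)
         (phi0' : A -> nat -> V -> R) (t' : A -> nat -> V -> R),
    (forall i a, 0 <= r' i a <= rbar N i a) ->
    feasible N r' phi' phi0' t' ->
    objective N r' phi' phi0' t' <= objective N (fun i a => adm i a * rbar N i a) phi phi0 t.
Proof.
move=> r' phi' phi0' t' Hr' Hf'.
have HN' := HN.
move: HN' => [_ [_ [_ [_ [HD [HC [Hrb HUt]]]]]]].
have [F0 G0] := @Flow_ge0 _ _ _ N _ _ _ _ HN Hfeas.
have [F0' G0'] := @Flow_ge0 _ _ _ N _ _ _ _ HN Hf'.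
have HFc : forall i j, E N i j -> ((Flow N phi t i j)%:E < capD N i j)%E.
  by case: Hfeas => [_ [_ [_ [_ [_ [_ [_ [_ [HF _]]]]]]]]].
have HGc : forall i, ((Work N phi0 t i)%:E < capC N i)%E.
  by case: Hfeas => [_ [_ [_ [_ [_ [_ [_ [_ [_ HG]]]]]]]]].
have HFc' : forall i j, E N i j -> ((Flow N phi' t' i j)%:E < capD N i j)%E.
  by case: Hf' => [_ [_ [_ [_ [_ [_ [_ [_ [HF _]]]]]]]]].
have HGc' : forall i, ((Work N phi0' t' i)%:E < capC N i)%E.
  by case: Hf' => [_ [_ [_ [_ [_ [_ [_ [_ [_ HG]]]]]]]]].
pose dD := fun i j => derive1 (Dl N i j) (Flow N phi t i j).
pose dC := fun i => derive1 (Cp N i) (Work N phi0 t i).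
have HDt : \sum_i \sum_(j | E N i j) Dl N i j (Flow N phi t i j)
   + (\sum_i \sum_(j | E N i j) dD i j * Flow N phi' t' i j
      - \sum_i \sum_(j | E N i j) dD i j * Flow N phi t i j)
   <= \sum_i \sum_(j | E N i j) Dl N i j (Flow N phi' t' i j).
  rewrite -!sumrB -big_split /=; apply: ler_sum => i _.
  rewrite -!sumrB -big_split /=; apply: ler_sum => j ej.
  have [_ [cv c1]] := HD i j ej.
  have Px : cost_dom (capD N i j) (Flow N phi t i j) by split; [exact: F0 | exact: HFc].
  have Py : cost_dom (capD N i j) (Flow N phi' t' i j) by split; [exact: F0' | exact: HFc'].
  have := @tangent_le _ _ _ _ _ cv Px Py (c1 _ Px).1.
  rewrite /dD mulrBr; lra.
have HCt : \sum_i Cp N i (Work N phi0 t i)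
   + (\sum_i dC i * Work N phi0' t' i - \sum_i dC i * Work N phi0 t i)
   <= \sum_i Cp N i (Work N phi0' t' i).
  rewrite -!sumrB -big_split /=; apply: ler_sum => i _.
  have [_ [cv c1]] := HC i.
  have Px : cost_dom (capC N i) (Work N phi0 t i) by split; [exact: G0 | exact: HGc].
  have Py : cost_dom (capC N i) (Work N phi0' t' i) by split; [exact: G0' | exact: HGc'].
  have := @tangent_le _ _ _ _ _ cv Px Py (c1 _ Px).1.
  rewrite /dC mulrBr; lra.
have HUt' : \sum_i \sum_a Util N i a (r' i a)
   <= \sum_i \sum_a Util N i a (adm i a * rbar N i a)
      + (\sum_i \sum_a p a 0%N i * r' i a - \sum_i \sum_a p a 0%N i * (adm i a * rbar N i a)).
  rewrite -!sumrB -big_split /=; apply: ler_sum => i _.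
  rewrite -!sumrB -big_split /=; apply: ler_sum => a _.
  have [_ [_ [cc c1]]] := HUt i a.
  have [ha0 [hr0 hs]] := Hadm i a.
  have rb0 := Hrb i a.
  have Px : util_dom (rbar N i a) (adm i a * rbar N i a).
    rewrite /util_dom mulr_ge0 //= ler_piMl //; lra.
  have Py : util_dom (rbar N i a) (r' i a) by exact: Hr'.
  have := @concave_tangent _ _ _ _ _ cc Px Py (c1 _ Px).1.
  set r := adm i a * rbar N i a.
  set d := derive1 (Util N i a) r.
  have [HU1 HU2] := HU i a.
  have : d * (r' i a - r) <= p a 0%N i * (r' i a - r).
    have [lt|gt|->] := ltgtP r (r' i a); last by rewrite subrr !mulr0.
    - apply: ler_wpM2r; first lra.
      apply: HU2.
      case: (ltP 0 (rej i a)) => // hrej.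
      have ha1 : adm i a = 1 by lra.
      move: lt; rewrite /r ha1 mul1r.
      by have /andP[_ ] := Hr' i a => /le_lt_trans H /H; rewrite ltxx.
    - apply: ler_wnM2r; first lra.
      apply: HU1.
      case: (ltP 0 (adm i a)) => // hadm.
      have ha0' : adm i a = 0 by lra.
      move: gt; rewrite /r ha0' mul0r.
      by have /andP[H _] := Hr' i a => /(le_lt_trans H); rewrite ltxx.
  rewrite mulrBr [p _ _ _ * _]mulrBr; lra.
have Hge := @ident _ _ _ N phi phi0 t p r' phi' phi0' t' Hf'.
have Heq := @ident _ _ _ N phi phi0 t p _ phi phi0 t Hfeas.
have Pge : 0 <= \sum_a \sum_(k < (ntask N a).+1) \sum_i
      (t' a k i * (phi0' a k i * dproc N phi phi0 t p a k i
         + \sum_j phi' a k i j * dlink N phi phi0 t p a k i j) - t' a k i * p a k i).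
  apply: sumr_ge0 => a _; apply: sumr_ge0 => k _; apply: sumr_ge0 => i _.
  rewrite subr_ge0; apply: (@local_ge _ _ _ N _ phi phi0 t p r' phi' phi0' t' Hfeas Hp HSC Hf').
  by rewrite -ltnS ltn_ord.
have Peq : \sum_a \sum_(k < (ntask N a).+1) \sum_i
      (t a k i * (phi0 a k i * dproc N phi phi0 t p a k i
         + \sum_j phi a k i j * dlink N phi phi0 t p a k i j) - t a k i * p a k i) = 0.
  apply: big1 => a _; apply: big1 => k _; apply: big1 => i _.
  rewrite -(@local_eq _ _ _ N _ phi phi0 t p Hfeas Hp) ?subrr //.
  by rewrite -ltnS ltn_ord.
rewrite Peq in Heq; rewrite -Hge in Pge.
move: Heq Pge HDt HCt HUt'; rewrite /objective /dD /dC /=.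
lra.
Qed.
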